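(* Let $d,e\in\mathbb{N}$ and set $n=2$, $m=d+2$. Assume that the Padé matrix $P_T$ of $\mathcal{T}^2_{d,e,d+2}$ is square, i.e. $\binom{e+2}{2}=\binom{d+4}{2}-\binom{d+2}{2}=2d+5$. Let $f=\det(P_T)\in\mathbb{C}[c_\gamma : 0\le|\gamma|\le d+2]$. If $\mathcal{T}^2_{d,e,d+2}=V(f)$ and $\mathcal{T}^2_{d,e,d+2}$ is a non-defective hypersurface of $\mathbb{P}^N$, $N=\binom{d+4}{2}-1$, then the Hessian of $f$ vanishes identically: $h_f=\det\left(\frac{\partial^2 f}{\partial c_\gamma\,\partial c_\delta}\right)_{0\le|\gamma|,|\delta|\le d+2}\equiv 0$.
   Context: Notation: $x=(x_1,\dots,x_n)$, multi-indices $\gamma\in\mathbb{N}^n$, $x^\gamma=x_1^{\gamma_1}\cdots x_n^{\gamma_n}$, $|\gamma|=\gamma_1+\dots+\gamma_n$. Taylor variety: for $P,Q\in\mathbb{C}[x]$ with $P(0)=Q(0)=1$, $\deg P\le d$, $\deg Q\le e$, write the Taylor expansion at the origin $P/Q=1+\sum_{0<|\gamma|\le m}c_\gamma x^\gamma+(\text{terms of order}\ge m+1)$. This defines a map $\psi:\mathbb{C}^{\binom{d+n}{n}-1}\times\mathbb{C}^{\binom{e+n}{n}-1}\to\mathbb{C}^{\binom{n+m}{n}-1}$, $(P,Q)\mapsto(c_\gamma)_{0<|\gamma|\le m}$. The Taylor variety $\mathcal{T}^n_{d,e,m}$ is the projective closure of the image of $\psi$ in $\mathbb{P}^N$, $N=\binom{n+m}{n}-1$,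 with homogeneous coordinates $[c_\gamma]_{0\le|\gamma|\le m}$ (it is irreducible). Its expected dimension is $\min\{\binom{d+n}{n}+\binom{e+n}{n}-2,\binom{m+n}{n}-1\}$; it is non-defective if its dimension equals the expected dimension. Padé matrix: for the generic polynomial $T=\sum_{0\le|\gamma|\le m}c_\gamma x^\gamma$, let $\varphi_T:\mathbb{C}[x]_{\le e}\to\operatorname{Span}\{x^\rho: d+1\le|\rho|\le m\}$ send $Q$ to the part of $QT$ supported on monomials of degree between $d+1$ and $m$. The Padé matrix $P_T$ is the matrix of $\varphi_T$ in monomial bases (columns indexed by monomials $x^\sigma$, $|\sigma|\le e$, rows by monomials $x^\rho$, $d+1\le|\rho|\le m$); its $(\rho,\sigma)$ entry is $c_{\rho-\sigma}$ if $\sigma\le\rho$ componentwise and $0$ otherwise. It has size $\left(\binom{m+n}{n}-\binom{d+n}{n}\right)\times\binom{e+n}{n}$, with entries linear forms in the $c_\gamma$. *)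

(* Defs.v *)
From HB Require Import structures.
From mathcomp Require Import all_boot all_order all_algebra.
From mathcomp Require Import mpoly.
From mathcomp Require Import reals.
From mathcomp Require Import complex.

Set Implicit Arguments.
Unset Strict Implicit.
Unset Printing Implicit Defensive.

Import Order.TTheory GRing.Theory Num.Theory.
Local Open Scope ring_scope.

Section TaylorVariety.
Variable C : fieldType.

Definition Mon (m : nat) := 'X_{1..2 < m.+1}.

Definition Kvars (m : nat) : nat := #|{: Mon m}|.

(* points of C^(N+1) (homogeneous coordinate vectors); c_gamma = x (enum_rank gamma) *)
Definition vec (m : nat) := 'I_(Kvars m) -> C.

Definition nonzero (k : nat) (x : 'I_k -> C) : Prop := exists i, x i != 0.

Definition trunc_series (m : nat) (x : vec m) : {mpoly C[2]} :=
  \sum_(g : Mon m) x (enum_rank g) *: 'X_[bmnm g].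

(* x = [1 : psi(P,Q)]: the Taylor expansion of P/Q at 0 up to order m is
   sum_{|gamma|<=m} x_gamma x^gamma, i.e. Q*T - P has no monomial of degree <= m
   (this forces x_0 = 1 since P(0)=Q(0)=1). *)
Definition is_taylor (d e m : nat) (P Q : {mpoly C[2]}) (x : vec m) : Prop :=
  [/\ (msize P <= d.+1)%N, (msize Q <= e.+1)%N, P@_0%MM = 1, Q@_0%MM = 1 &
      forall g : 'X_{1..2}, (mdeg g <= m)%N -> (Q * trunc_series x - P)@_g = 0].

Definition taylor_image (d e m : nat) (x : vec m) : Prop :=
  exists P Q : {mpoly C[2]}, @is_taylor d e m P Q x.

Definition homogeneous (k : nat) (p : {mpoly C[k]}) : Prop :=
  exists t : nat, p \is t.-homog.

(* projective (Zariski) closure in P^(k-1) of a set of points A, as a cone of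
   nonzero vectors: common zeros of all homogeneous polynomials vanishing on A *)
Definition proj_closure (k : nat) (A : ('I_k -> C) -> Prop) (x : 'I_k -> C) : Prop :=
  nonzero x /\
  forall p : {mpoly C[k]}, homogeneous p ->
    (forall a, A a -> p.@[a] = 0) -> p.@[x] = 0.

Definition taylor_variety (d e m : nat) : vec m -> Prop :=
  proj_closure (@taylor_image d e m).

Definition zero_set (k : nat) (f : {mpoly C[k]}) (x : 'I_k -> C) : Prop :=
  nonzero x /\ f.@[x] = 0.

Definition proj_closed (k : nat) (Z : ('I_k -> C) -> Prop) : Prop :=
  exists S : {mpoly C[k]} -> Prop, (forall p, S p -> homogeneous p) /\
    forall x, Z x <-> (nonzero x /\ forall p, S p -> p.@[x] = 0).

Definition psubset (k : nat) (Z1 Z2 : ('I_k -> C) -> Prop) : Prop :=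
  forall x, Z1 x -> Z2 x.

Definition proj_irreducible (k : nat) (Z : ('I_k -> C) -> Prop) : Prop :=
  [/\ proj_closed Z, exists x, Z x &
      forall Z1 Z2, proj_closed Z1 -> proj_closed Z2 ->
        (forall x, Z x -> Z1 x \/ Z2 x) -> psubset Z Z1 \/ psubset Z Z2].

Definition has_chain (k : nat) (X : ('I_k -> C) -> Prop) (l : nat) : Prop :=
  exists Zs : nat -> ('I_k -> C) -> Prop,
    (forall i, (i <= l)%N -> proj_irreducible (Zs i) /\ psubset (Zs i) X) /\
    (forall i, (i < l)%N -> psubset (Zs i) (Zs i.+1) /\ ~ psubset (Zs i.+1) (Zs i)).

Definition proj_dim (k : nat) (X : ('I_k -> C) -> Prop) (l : nat) : Prop :=
  has_chain X l /\ ~ has_chain X l.+1.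

(* variable c_g of C[c_gamma : |gamma| <= m] (0 if |g| > m) *)
Definition cvar (m : nat) (g : 'X_{1..2}) : {mpoly C[Kvars m]} :=
  if @insub _ (fun g : 'X_{1..2} => (mdeg g < m.+1)%N) (Mon m) g is Some g'
  then 'X_(enum_rank g') else 0.

Definition PadeRow (d m : nat) := {r : Mon m | (d < mdeg (bmnm r))%N}.

Definition pade_mx (d e m : nat) :
  'M[{mpoly C[Kvars m]}]_(#|{: PadeRow d m}|, #|{: Mon e}|) :=
  \matrix_(i, j)
    let r := bmnm (val (enum_val i)) in
    let s := bmnm (enum_val j) in
    if (s <= r)%MM then cvar m (r - s)%MM else 0.

Definition pade_det (d e m : nat) (Hsq : #|{: PadeRow d m}| = #|{: Mon e}|) :
  {mpoly C[Kvars m]} :=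
  \det (castmx (Hsq, erefl) (pade_mx d e m)).

Definition hessian (k : nat) (f : {mpoly C[k]}) : 'M[{mpoly C[k]}]_k :=
  \matrix_(i, j) mderiv i (mderiv j f).

End TaylorVariety.

Definition expected_dim (n d e m : nat) : nat :=
  minn ('C(d + n, n) + 'C(e + n, n) - 2) ('C(m + n, n) - 1).

(* Main.v *)
Require Import Defs.
From HB Require Import structures.
From mathcomp Require Import all_boot all_order all_algebra.
From mathcomp Require Import mpoly.
From mathcomp Require Import zify.
Set Implicit Arguments. Unset Strict Implicit.
Import Order.TTheory GRing.Theory Num.Theory.
Local Open Scope ring_scope.

Definition mon2 (a b : nat) : 'X_{1..2} :=
  [multinom (if i == 0 :> nat then a else b) | i < 2].

Lemma mdeg_mon2 a b : mdeg (mon2 a b) = (a + b)%N.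
Proof. by rewrite mdegE !big_ord_recl big_ord0 /= !mnmE /= addn0. Qed.

Lemma mon2_deg_lt m k (i : 'I_k.+1) (hk : (k <= m)%N) :
  (mdeg (mon2 i (k - i)) < m.+1)%N.
Proof. rewrite mdeg_mon2; have := ltn_ord i; lia. Qed.

Definition fl m k (hk : (k <= m)%N) (i : 'I_k.+1) : Mon m :=
  BMultinom (mon2_deg_lt i hk).

Lemma fl_inj m k (hk : (k <= m)%N) : injective (fl hk).
Proof.
move=> i j /(congr1 (fun g : Mon m => bmnm g ord0)).
by rewrite /= !mnmE /= => /val_inj.
Qed.

Lemma level_card m k (hk : (k <= m)%N) :
  #|[pred g : Mon m | mdeg g == k]| = k.+1.
Proof.
rewrite -[in RHS](card_ord k.+1) -(card_image (@fl_inj m k hk)).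
apply: eq_card => g; rewrite !inE; apply/idP/idP.
- move=> /eqP hg; apply/imageP.
  have h0 : (g ord0 < k.+1)%N.
    by rewrite -hg mdegE big_ord_recl; lia.
  exists (Ordinal h0) => //; apply/val_inj/mnmP => j /=.
  rewrite mnmE; case: j => [[|[|j]] hj] //=.
  - by congr (g _); apply/val_inj.
  rewrite -hg mdegE !big_ord_recl big_ord0 /=.
  have -> : (Ordinal hj) = (lift ord0 ord0) by apply/val_inj.
  lia.
- by move=> /imageP [i _ ->]; rewrite /= mdeg_mon2; have := ltn_ord i; lia.
Qed.

Lemma card_deg m (P : pred nat) :
  #|[pred g : Mon m | P (mdeg g)]| = (\sum_(k < m.+1 | P k) k.+1)%N.
Proof.
rewrite -sum1_card.
rewrite (partition_big (fun g : Mon m => Ordinal (bmdeg g)) (fun k : 'I_m.+1 => P k)) //=.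
apply: eq_bigr => k Pk.
rewrite -(level_card (ltnSE (ltn_ord k))) -sum1_card.
apply: eq_bigl => g; rewrite !inE; apply/idP/idP.
- by move=> /andP[_ /eqP <-].
- move=> /eqP hg; have -> : Ordinal (bmdeg g) = k by apply/val_inj.
  by rewrite eqxx hg Pk.
Qed.

Lemma card_Mon e : (2 * #|{: Mon e}| = e.+1 * e.+2)%N.
Proof.
have -> : #|{: Mon e}| = #|[pred g : Mon e | predT (mdeg g)]| by apply: eq_card.
rewrite card_deg big_mkcond /=; elim: e => [|e IH]; first by rewrite big_ord1.
rewrite big_ord_recr /= mulnDr IH; lia.
Qed.

Lemma card_Pade d : #|{: PadeRow d (d + 2)}| = (2 * d + 5)%N.
Proof.
rewrite card_sig.
have -> : #|[pred r : Mon (d + 2) | (d < mdeg (bmnm r))%N]| =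
  #|[pred g : Mon (d+2) | (fun k => d < k)%N (mdeg g)]| by [].
rewrite card_deg.
rewrite big_mkcond addn2 !big_ord_recr /= big1 /= ?ltnn ?leqnn ?ltnSn ?leqnSn ?(ltnW (ltnSn d)); first lia.
by move=> i _; have := ltn_ord i; case: ifP => //; lia.
Qed.

Lemma e_le_d d e : #|{: PadeRow d (d + 2)}| = #|{: Mon e}| -> (e <= d)%N.
Proof.
move=> H; have := card_Mon e; rewrite -H card_Pade => h.
case: (leqP e d) => // hed.
have : (d <= 1)%N by nia.
have : (e <= 3)%N by nia.
clear H; move: h; case: d hed => [|[|d]]; case: e => [|[|[|[|e]]]] //; lia.
Qed.
Section Free.
Variable C : fieldType.
Variable m : nat.

Lemma mdeg0_lt : (mdeg (0%MM : 'X_{1..2}) < m.+1)%N.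
Proof. by rewrite mdeg0. Qed.

Definition g0 : Mon m := BMultinom mdeg0_lt.
Definition i0 : 'I_(Kvars m) := enum_rank g0.

Definition freeV (p : {mpoly C[Kvars m]}) := mderiv i0 p = 0.

Lemma cvar_free g : g != 0%MM -> freeV (cvar C m g).
Proof.
move=> gn0; rewrite /freeV /cvar; case: insubP => [g' _ hv|_]; last exact: mderiv0.
rewrite mderivX mnm1E.
have -> : (enum_rank g' == i0) = false.
  apply/negbTE/negP => /eqP /enum_rank_inj hg; move: gn0.
  by rewrite -hv hg eqxx.
by rewrite scale0r.
Qed.

Lemma prod_free (I : Type) (r : seq I) (F : I -> {mpoly C[Kvars m]}) :
  (forall i, freeV (F i)) -> freeV (\prod_(i <- r) F i).
Proof.
move=> hF; rewrite /freeV; elim/big_ind: _ => //.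
- by rewrite -mpolyC1 mderivC.
- by move=> x y hx hy; rewrite mderivM hx hy !(mulr0, mul0r) addr0.
- by move=> i _; apply: hF.
Qed.

Lemma det_free n (A : 'M[{mpoly C[Kvars m]}]_n) :
  (forall i j, freeV (A i j)) -> freeV (\det A).
Proof.
move=> hA; rewrite /freeV /determinant.
rewrite (@big_morph _ _ (mderiv i0) 0 +%R 0 +%R (@mderivD _ _ i0) (mderiv0 _ _)).
apply: big1 => s _; rewrite mderivM.
rewrite (prod_free _ (fun i => hA _ _)).
rewrite mulr0 addr0.
case: (perm.odd_perm s); rewrite /= ?expr1 ?expr0 -mpolyC1 ?mderivN mderivC ?oppr0 mul0r //.
Qed.
End Free.
From mathcomp Require Import reals complex.
Unset Implicit Arguments.
Set Strict Implicit.
Theorem theorem1p1 (R : realType) (d e : nat)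
  (Hsq : #|{: PadeRow d (d + 2)}| = #|{: Mon e}|) :
  let f := pade_det R[i] Hsq in
  let T := @taylor_variety R[i] d e (d + 2) in
  let N := ('C(d + 4, 2) - 1)%N in
  (forall x, T x <-> zero_set f x) ->
  proj_dim T (N - 1) ->
  proj_dim T (expected_dim 2 d e (d + 2)) ->
  \det (hessian f) = 0.
Proof.
move=> f T N _ _ _.
have hed := e_le_d Hsq.
have hf : freeV f.
  apply: det_free => i j; rewrite castmxE mxE /=.
  set s := enum_val _; set rr := enum_val _.
  case: ifP => hsr; last by rewrite /freeV mderiv0.
  apply: cvar_free; apply/negP => /eqP h0.
  have hr : (d < mdeg (sval rr))%N by clear; case: rr => x hx.
  have hs : (mdeg s < e.+1)%N by rewrite bmdeg.
  have := submK hsr; rewrite h0 add0m => hrs.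
  by move: hr; rewrite -hrs; lia.
rewrite (expand_det_row _ (i0 (d + 2))) big1 // => j _.
by rewrite mxE mderiv_comm hf mderiv0 GRing.mul0r.
Qed.
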